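(* Let $0<m<L$, $\kappa=L/m$, $\delta\in(0,1)$, and suppose $\alpha>\alpha_-:=\frac{1}{1-\delta}\left(\frac{2}{L+m}-\frac{\delta}{m}\right)$ and \[ \frac1L\le\alpha\le\frac{2}{(1+\delta)L+(1-\delta)m}. \] Define \begin{multline*} F(t,\rho,\lambda,\gamma) = -\alpha^2\big((L-m)^2-2mL\lambda(1-\delta^2)\big)\rho^2-\gamma^2(t-1+L\alpha)^2 + 2\lambda\alpha\rho^2(L+m)(t-1) \\ + \lambda\rho^2(2-\lambda\delta^2)(t-1)^2 - 2\alpha\gamma\big((L-m)-m\lambda(1-\delta^2)\big)(1-\alpha L-t)t + 2\lambda\gamma\big((1-\alpha L)t-\rho^2\big)(t-1), \end{multline*} and set $\rho_\star=1-\alpha m(1-\delta)$, $\lambda_\star=\dfrac{2-\alpha(L+m)}{\delta^2}$, and \[ \gamma_\star=\frac{\rho_\star\big(\kappa-1+(\kappa+1)(\delta-\rho_\star)\big)}{(\kappa-(1-\delta))\,\delta}. \] Then $\partial_t F(0,\rho_\star,\lambda_\star,\gamma_\star)\le 0$.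
   Context: $\partial_t F$ denotes the partial derivative of $F$ with respect to its first argument $t$. *)

(* Defs.v *)
From Stdlib Require Import Reals.
From Coquelicot Require Import Coquelicot.
Open Scope R_scope.

Definition F (L m alpha delta : R) (t rho lam gam : R) : R :=
  - alpha^2 * ((L - m)^2 - 2 * m * L * lam * (1 - delta^2)) * rho^2
  - gam^2 * (t - 1 + L * alpha)^2
  + 2 * lam * alpha * rho^2 * (L + m) * (t - 1)
  + lam * rho^2 * (2 - lam * delta^2) * (t - 1)^2
  - 2 * alpha * gam * ((L - m) - m * lam * (1 - delta^2)) * (1 - alpha * L - t) * t
  + 2 * lam * gam * ((1 - alpha * L) * t - rho^2) * (t - 1).

Definition rho_star (m alpha delta : R) : R := 1 - alpha * m * (1 - delta).
Definition lambda_star (L m alpha delta : R) : R := (2 - alpha * (L + m)) / delta^2.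
Definition gamma_star (L m alpha delta : R) : R :=
  let kappa := L / m in
  let r := rho_star m alpha delta in
  r * (kappa - 1 + (kappa + 1) * (delta - r)) / ((kappa - (1 - delta)) * delta).
Definition alpha_minus (L m delta : R) : R :=
  / (1 - delta) * (2 / (L + m) - delta / m).

(* Main.v *)
Require Import Defs.
From Stdlib Require Import Reals Lra Psatz.
From Coquelicot Require Import Coquelicot.
Open Scope R_scope.

Lemma DF (L m alpha delta rho lam gam : R) :
  Derive (fun t => F L m alpha delta t rho lam gam) 0 =
  - 2 * gam^2 * (L*alpha - 1) + 2*lam*alpha*rho^2*(L+m) - 2*lam*rho^2*(2-lam*delta^2)
  - 2*alpha*gam*((L - m) - m * lam * (1 - delta^2))*(1-alpha*L)
  - 2*lam*gam*(1-alpha*L+rho^2).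
Proof.
  apply is_derive_unique. unfold F. auto_derive; [exact I|]. ring.
Qed.

Theorem lemma3p4 (L m delta alpha : R) :
  0 < m -> m < L -> 0 < delta -> delta < 1 ->
  alpha_minus L m delta < alpha ->
  1 / L <= alpha ->
  alpha <= 2 / ((1 + delta) * L + (1 - delta) * m) ->
  Derive (fun t => F L m alpha delta t (rho_star m alpha delta)
                     (lambda_star L m alpha delta) (gamma_star L m alpha delta)) 0
  <= 0.
Proof.
  intros hm hmL hd0 hd1 hmin hlo hhi.
  rewrite DF.
  assert (hL : 0 < L) by lra.
  assert (haL : 1 <= alpha * L).
  { apply (Rmult_le_compat_r L) in hlo; [|lra]. field_simplify in hlo; lra. }
  assert (ha : 0 < alpha).
  { destruct (Rle_lt_dec alpha 0); [|lra]. nra. }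
  assert (hden : 0 < (1 + delta) * L + (1 - delta) * m) by nra.
  assert (hA : alpha * ((1 + delta) * L + (1 - delta) * m) <= 2).
  { apply (Rmult_le_compat_r ((1 + delta) * L + (1 - delta) * m)) in hhi; [|lra].
    field_simplify in hhi; lra. }
  assert (hB : 2*m - delta*(L+m) < alpha*m*(1-delta)*(L+m)).
  { unfold alpha_minus in hmin.
    assert (h := hmin).
    apply (Rmult_lt_compat_r (m*(L+m)*(1-delta))) in h; [|apply Rmult_lt_0_compat; nra].
    field_simplify in h; try lra; try nra. }
  unfold gamma_star, rho_star, lambda_star.
  set (r := 1 - alpha * m * (1 - delta)).
  set (mu := 2 - alpha * (L + m)).
  assert (hmu : alpha*delta*(L-m) <= mu) by (unfold mu; nra).
  assert (hr : 0 < r) by (unfold r; nra).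
  set (l := mu / delta^2).
  assert (hl : l * delta^2 = mu) by (unfold l; field; lra).
  assert (hl2 : alpha*(L-m) <= l * delta).
  { apply (Rmult_le_reg_r delta); [lra|]. replace (l*delta*delta) with (l*delta^2) by ring. nra. }
  set (g := r * (L / m - 1 + (L / m + 1) * (delta - r)) / ((L / m - (1 - delta)) * delta)).
  assert (hN : 0 < m * (L / m - 1 + (L / m + 1) * (delta - r))).
  { replace (m * (L / m - 1 + (L / m + 1) * (delta - r))) with
      (L - m + (L+m)*(delta - r)) by (field; lra). unfold r. nra. }
  assert (hN' : 0 < L / m - 1 + (L / m + 1) * (delta - r)).
  { destruct (Rle_lt_dec (L / m - 1 + (L / m + 1) * (delta - r)) 0); [|lra]. nra. }
  assert (hLm : 1 < L / m).
  { apply (Rmult_lt_reg_r m); [lra|]. field_simplify; lra. }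
  assert (hg : 0 < g).
  { unfold g. apply Rdiv_lt_0_compat; apply Rmult_lt_0_compat; lra. }
  set (p := L*alpha - 1).
  assert (hp : 0 <= p) by (unfold p; lra).
  match goal with |- ?X <= 0 => assert (E : X =
    2*g*(p*(alpha*(L-m) - g) - l*(r*(mu+alpha*m*delta) + p*alpha*m*delta*(1-delta))))
    by (transitivity (2*g*(p*(alpha*(L-m) - g) - l*(r*(mu+alpha*m*delta) + p*alpha*m*delta*(1-delta))) + 2*l*r^2*(l*delta^2 - mu));
        [unfold p, mu, r; ring | rewrite hl; ring]) end.
  assert (G : p*(alpha*(L-m) - g) - l*(r*(mu+alpha*m*delta) + p*alpha*m*delta*(1-delta)) <= 0).
  { assert (h1 : alpha*delta*L <= mu + alpha*m*delta) by nra.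
    assert (h2 : 0 <= p*alpha*m*delta*(1-delta)).
    { repeat apply Rmult_le_pos; lra. }
    assert (h3 : l*delta*(r*alpha*L + p*alpha*m*(1-delta))
                 <= l*(r*(mu+alpha*m*delta) + p*alpha*m*delta*(1-delta))).
    { assert (hmu0 : 0 <= mu) by nra.
      assert (hl0 : 0 <= l).
      { unfold l. apply Rmult_le_pos; [lra|]. apply Rlt_le, Rinv_0_lt_compat, pow_lt; lra. }
      assert (0 <= l*(r*(mu+alpha*m*delta - alpha*delta*L))).
      { apply Rmult_le_pos; [lra|]. apply Rmult_le_pos; lra. }
      nra. }
    assert (h4 : alpha*(L-m)*(r*alpha*L + p*alpha*m*(1-delta))
                 <= l*delta*(r*alpha*L + p*alpha*m*(1-delta))).
    { apply Rmult_le_compat_r; [|lra].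
      assert (0 < r*alpha*L) by (repeat apply Rmult_lt_0_compat; lra).
      assert (0 <= p*alpha*m*(1-delta)) by (repeat apply Rmult_le_pos; lra).
      lra. }
    assert (h5 : p <= r*alpha*L + p*alpha*m*(1-delta)).
    { assert (r*alpha*L + p*alpha*m*(1-delta) - p = r) by (unfold p, r; ring). lra. }
    assert (h6 : p * (alpha*(L-m)) <= alpha*(L-m)*(r*alpha*L + p*alpha*m*(1-delta))).
    { rewrite (Rmult_comm p). apply Rmult_le_compat_l; [|lra]. apply Rmult_le_pos; lra. }
    assert (0 <= p*g) by (apply Rmult_le_pos; lra).
    lra. }
  rewrite E. assert (0 < 2*g) by lra.
  assert (2*g*(p*(alpha*(L-m) - g) - l*(r*(mu+alpha*m*delta) + p*alpha*m*delta*(1-delta))) <= 2*g*0) by (apply Rmult_le_compat_l; lra).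
  lra.
Qed.
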